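(* Let $(P,\omega)$ be a sign-graded labeled poset of rank $r$ with $p=|P|$ and $\omega$ canonical, and let $\pi\in\mathcal{L}(P,\omega)$. Let $\hat\pi$ be the element of $\operatorname{Orb}(\pi)$ such that $0\hat\pi0$ has no double descents. Then $$\sum_{\sigma\in\operatorname{Orb}(\pi)}t^{\operatorname{des}(\sigma)}=t^{\operatorname{des}(\hat\pi)}(1+t)^{p-r-1-2\operatorname{des}(\hat\pi)}.$$ Moreover, if $r=0$ then $\operatorname{peak}$ is constant on each orbit of the $\mathbb{Z}_2^P$-action and $\operatorname{peak}(\pi)=\operatorname{des}(\hat\pi)$ for all $\pi\in\mathcal{L}(P,\omega)$.
   Context: A labeled poset is a finite poset $P$ with an injection $\omega:P\to\mathbb{Z}$. Its Jordan–Hölder set $\mathcal{L}(P,\omega)$ is the set of words $\pi=a_1\cdots a_p$ that are permutations of $\omega(P)$ such that $x<_Py$ implies $\omega(x)$ precedes $\omega(y)$. For a cover relation $x\lessdot y$ in $P$ let $\epsilon(x,y)=1$ if $\omega(x)<\omega(y)$ and $-1$ otherwise. $(P,\omega)$ is sign-graded if for every maximal chain $x_1<x_2<\cdots<x_k$ the sum $\sum_{i=2}^k\epsilon(x_{i-1},x_i)$ is the same; this common value $r$ is the rank, and $\rho(x)$ is this sum along any saturated chain from a minimal element to $x$. The labeling $\omega$ is canonical if $(P,\omega)$ is sign-graded, $\rho$ takes values in $\{0,1\}$, elements of rank $0$ have negative labels and elements of rank $1$ have positive labels. For $\pi=a_1\cdots a_p$, $\operatorname{des}(\pi)=|\{i\in[p-1]:a_i>a_{i+1}\}|$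 and $\operatorname{peak}(\pi)=|\{2\le i\le p-1:a_{i-1}<a_i>a_{i+1}\}|$. Set $a_0=a_{p+1}=0$; double ascents/descents, peaks and valleys of letters $a_k$ ($k\in[p]$) are taken in $0\pi0$ ($a_{k-1}<a_k<a_{k+1}$, $a_{k-1}>a_k>a_{k+1}$, $a_{k-1}<a_k>a_{k+1}$, $a_{k-1}>a_k<a_{k+1}$ respectively). For $x\in\omega(P)$ define $\psi_x(\pi)$: if $x<0$ is a double descent, move $x$ to between the first pair of consecutive letters $a_i,a_{i+1}$ to the right of $x$ with $a_i<x<a_{i+1}$; if $x<0$ is a double ascent, move $x$ to between the first pair to the left with $a_i>x>a_{i+1}$; if $x>0$ is a double descent, move $x$ to between the first pair to the left with $a_i<x<a_{i+1}$; if $x>0$ is a double ascent, move $x$ to between the first pair to the right with $a_i>x>a_{i+1}$; if $x$ is a peak or valley, $\psi_x(\pi)=\pi$. These maps send $\mathcal{L}(P,\omega)$ to itself and define a $\mathbb{Z}_2^P$-action $\psi_S(\pi)=\prod_{x\in S}\psi_{\omega(x)}(\pi)$, $S\subseteq P$; $\operatorname{Orb}(\pi)$ is the orbit of $\pi$, and it contains a unique element $\hat\pi$ with $0\hat\pi0$ having no double descents. *)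

(* Defs.v *)
From mathcomp Require Import all_boot all_order all_algebra.
Set Implicit Arguments. Unset Strict Implicit. Unset Printing Implicit Defensive.
Import Order.TTheory GRing.Theory Num.Theory.
Local Open Scope ring_scope.

Definition partial_order (T : finType) (le : rel T) : Prop :=
  [/\ reflexive le, antisymmetric le & transitive le].

Section LabeledPoset.
Variables (T : finType) (le : rel T) (omega : T -> int).

Definition plt (x y : T) : bool := (x != y) && le x y.

Definition covers (x y : T) : bool :=
  plt x y && [forall z, ~~ (plt x z && plt z y)].

Definition minimal (x : T) : bool := [forall z, le z x ==> (z == x)].

Definition eps (x y : T) : int := if omega x < omega y then 1 else -1.

Definition chain_sum (s : seq T) : int :=
  match s with
  | [::] => 0
  | x :: s' => \sum_(e <- pairmap eps x s') e
  end.

Definition maximal_chain (s : seq T) : bool :=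
  sorted plt s && [forall z, (z \in s) || has (fun y => ~~ (le y z || le z y)) s].

Definition sign_graded_rank (r : int) : Prop :=
  forall s, maximal_chain s -> chain_sum s = r.

Definition sign_graded : Prop := exists r, sign_graded_rank r.

Definition sat_chain_to (s : seq T) (x : T) : bool :=
  match s with
  | [::] => false
  | y :: s' => [&& minimal y, path covers y s' & last y s' == x]
  end.

(* canonical labeling: sign-graded, rho in {0,1}, rank-0 elements negative
   labels, rank-1 elements positive labels (rho(x) = chain_sum of any
   saturated chain from a minimal element to x) *)
Definition canonical : Prop :=
  sign_graded /\
  forall x s, sat_chain_to s x ->
    (chain_sum s = 0 /\ omega x < 0) \/ (chain_sum s = 1 /\ 0 < omega x).

Definition in_JH (w : seq int) : bool :=
  perm_eq w (map omega (enum T)) &&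
  [forall x, forall y, plt x y ==> (index (omega x) w < index (omega y) w)%N].

End LabeledPoset.

Definition des (w : seq int) : nat :=
  count (fun i => nth 0 w i > nth 0 w i.+1) (iota 0 (size w).-1).

(* peaks at positions 2 <= i <= p-1 (1-based), i.e. interior peaks *)
Definition peak (w : seq int) : nat :=
  count (fun i => (nth 0 w i.-1 < nth 0 w i) && (nth 0 w i > nth 0 w i.+1))
        (iota 1 (size w).-2).

Definition no_double_descent (w : seq int) : bool :=
  let z := 0 :: rcons w 0 in
  all (fun k => ~~ ((nth 0 z k.-1 > nth 0 z k) && (nth 0 z k > nth 0 z k.+1)))
      (iota 1 (size w)).

(* ins_r c x a s: scanning the word a :: s (followed by the boundary letter 0),
   insert x right after the first letter a_i such that c a_i a_{i+1}. *)
Fixpoint ins_r (c : int -> int -> bool) (x a : int) (s : seq int) : seq int :=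
  if c a (head 0 s) then a :: x :: s
  else match s with
       | [::] => [:: a; x]
       | b :: s' => a :: ins_r c x b s'
       end.

Definition move_right (c : int -> int -> bool) (x : int) (pre post : seq int) :=
  pre ++ match post with
         | [::] => [:: x]
         | a :: s => ins_r c x a s
         end.

Definition move_left (c : int -> int -> bool) (x : int) (pre post : seq int) :=
  match rev pre with
  | [::] => x :: post
  | a :: s => rev (ins_r (fun u v => c v u) x a s) ++ post
  end.

Definition psi (x : int) (w : seq int) : seq int :=
  let k := index x w in
  let pre := take k w in
  let post := drop k.+1 w in
  let l := last 0 pre in
  let r := head 0 post in
  if x \notin w then w else
  if (l > x) && (x > r) then
    (if x < 0 then move_right (fun a b => (a < x) && (x < b)) x pre post
     else move_left (fun a b => (a < x) && (x < b)) x pre post)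
  else if (l < x) && (x < r) then
    (if x < 0 then move_left (fun a b => (a > x) && (x > b)) x pre post
     else move_right (fun a b => (a > x) && (x > b)) x pre post)
  else w.

Definition psiS (T : finType) (omega : T -> int) (A : {set T}) (w : seq int) :=
  foldr (fun x v => psi (omega x) v) w (enum A).

Definition orbit_of (T : finType) (omega : T -> int) (w : seq int) : seq (seq int) :=
  undup [seq psiS omega A w | A <- enum [set: {set T}]].

(* Main.v *)
Require Import Defs.
From mathcomp Require Import all_boot all_order all_algebra.
From mathcomp Require Import zify.
Set Implicit Arguments. Unset Strict Implicit. Unset Printing Implicit Defensive.
Import Order.TTheory GRing.Theory Num.Theory.
Local Open Scope ring_scope.

Definition lf (w : seq int) (y : int) := last 0 (take (index y w) w).
Definition rt (w : seq int) (y : int) := head 0 (drop (index y w).+1 w).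
Definition btw (a x b : int) := ((a < x) && (x < b)) || ((b < x) && (x < a)).
Definition ss (a b y : int) := ((a < y) == (b < y)) && ((y < a) == (y < b)).

Lemma ss_refl a y : ss a a y.
Proof. by rewrite /ss !eqxx. Qed.
Lemma ss_sym a b y : ss a b y -> ss b a y.
Proof. by rewrite /ss => /andP[/eqP-> /eqP->]; rewrite !eqxx. Qed.
Lemma ss_trans a b c y : ss a b y -> ss b c y -> ss a c y.
Proof. by rewrite /ss => /andP[/eqP-> /eqP->]. Qed.

Lemma btw_ss a x y : btw a x y -> ss x a y.
Proof.
rewrite /btw /ss => /orP[]/andP[h1 h2]; apply/andP; split; apply/eqP; apply/idP/idP; lia.
Qed.
Lemma btwC a x b : btw a x b = btw b x a.
Proof. by rewrite /btw orbC. Qed.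

Lemma nbE A B y : y \notin A ->
  lf (A ++ y :: B) y = last 0 A /\ rt (A ++ y :: B) y = head 0 B.
Proof.
move=> yA; have hi : index y (A ++ y :: B) = size A.
  by rewrite index_cat (negbTE yA) /= eqxx addn0.
rewrite /lf /rt hi take_size_cat //; split => //.
have -> : A ++ y :: B = (A ++ [:: y]) ++ B by rewrite -catA.
by rewrite -(size_rcons A y) -cats1 drop_size_cat.
Qed.

Lemma uniq_notin (A B : seq int) (y : int) : uniq (A ++ y :: B) -> y \notin A.
Proof.
rewrite cat_uniq => /and3P[_ h _]; apply: contra h => yA.
by apply/hasP; exists y; rewrite ?inE ?eqxx.
Qed.

Lemma move_side P Q x y :
  uniq (P ++ x :: Q) -> btw (last 0 P) x (head 0 Q) -> y \in P ++ Q ->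
  ss (lf (P ++ x :: Q) y) (lf (P ++ Q) y) y /\
  ss (rt (P ++ x :: Q) y) (rt (P ++ Q) y) y.
Proof.
move=> u hb; rewrite mem_cat => /orP[] yin.
- case/splitPr: yin u hb => P1 P2 u hb.
  have yP1 : y \notin P1.
    by apply: (@uniq_notin _ (P2 ++ x :: Q)); rewrite -cat_cons catA.
  rewrite -!catA !cat_cons.
  have [-> ->] := nbE (P2 ++ x :: Q) yP1.
  have [-> ->] := nbE (P2 ++ Q) yP1.
  split; first exact: ss_refl.
  case: P2 u hb => [|b P2] u hb /=; last exact: ss_refl.
  rewrite last_cat /= in hb.
  by apply: btw_ss; rewrite btwC.
- case/splitPr: yin u hb => Q1 Q2 u hb.
  have yA1 : y \notin P ++ x :: Q1.
    by apply: (@uniq_notin _ Q2); rewrite -catA.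
  have yA2 : y \notin P ++ Q1.
    apply: contra yA1; rewrite !mem_cat inE => /orP[->//|->]; by rewrite !orbT.
  have -> : P ++ x :: Q1 ++ y :: Q2 = (P ++ x :: Q1) ++ y :: Q2 by rewrite -catA.
  have -> : P ++ Q1 ++ y :: Q2 = (P ++ Q1) ++ y :: Q2 by rewrite -catA.
  have [-> ->] := nbE Q2 yA1.
  have [-> ->] := nbE Q2 yA2.
  split; last exact: ss_refl.
  case: Q1 u hb {yA1 yA2} => [|b Q1] u hb /=; rewrite !last_cat /=; last exact: ss_refl.
  exact: btw_ss.
Qed.

Lemma end_side P Q x :
  btw (last 0 P) x (head 0 Q) ->
  ss (last 0 (P ++ x :: Q)) (last 0 (P ++ Q)) 0 /\
  ss (head 0 (P ++ x :: Q)) (head 0 (P ++ Q)) 0.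
Proof.
move=> hb; split.
- rewrite !last_cat /=; case: Q hb => [|b Q] hb /=; last exact: ss_refl.
  exact: btw_ss.
- case: P hb => [|a P] hb /=; last exact: ss_refl.
  by apply: btw_ss; rewrite btwC.
Qed.

Lemma ins_rP (R : rel int) (c : int -> int -> bool) x a s :
  (forall u v, c u v = R u x && R x v) ->
  (forall b, b != x -> R x b || R b x) ->
  R a x -> R x 0 -> x \notin s ->
  exists u v, [/\ a :: s = u ++ v, u != [::], ins_r c x a s = u ++ x :: v,
     R (last 0 u) x & R x (head 0 v)].
Proof.
move=> hc htot; elim: s a => [|b s IH] a hax hx0 xs /=.
- rewrite hc hax hx0 /=; exists [:: a], [::]; split => //.
- rewrite hc hax /=.
  case: ifP => hxb.
    by exists [:: a], (b :: s); split.
  have hbx : b != x by apply: contraNneq xs => ->; rewrite inE eqxx.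
  have Rbx : R b x by move: (htot b hbx); rewrite hxb.
  have xs' : x \notin s by apply: contra xs; rewrite inE => ->; rewrite orbT.
  have [u [v [e1 e2 e3 e4 e5]]] := IH b Rbx hx0 xs'.
  exists (a :: u), v; split => //; first by rewrite e1.
  + by rewrite e3.
  + by case: u e2 e4 {e1 e3} => [|u0 u] //=.
Qed.

Lemma last_nonnil (d d' : int) u : u != [::] -> last d u = last d' u.
Proof. by case: u. Qed.

Lemma mr_spec (R : rel int) c x pre a s :
  (forall u v, c u v = R u x && R x v) ->
  (forall b, b != x -> R x b || R b x) ->
  R a x -> R x 0 -> x \notin s ->
  exists P2 Q2, [/\ move_right c x pre (a :: s) = P2 ++ x :: Q2,
     P2 ++ Q2 = pre ++ a :: s, R (last 0 P2) x & R x (head 0 Q2)].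
Proof.
move=> hc ht ha h0 xs.
have [u [v [e1 e2 e3 e4 e5]]] := ins_rP hc ht ha h0 xs.
exists (pre ++ u), v; rewrite /move_right e3 e1 -!catA; split => //.
by rewrite last_cat (last_nonnil _ 0 e2).
Qed.

Lemma ml_spec (R : rel int) c x pre post :
  (forall u v, c v u = R u x && R x v) ->
  (forall b, b != x -> R x b || R b x) ->
  pre != [::] -> R (last 0 pre) x -> R x 0 -> x \notin pre ->
  exists P2 Q2, [/\ move_left c x pre post = P2 ++ x :: Q2,
     P2 ++ Q2 = pre ++ post, R x (last 0 P2) & R (head 0 Q2) x].
Proof.
move=> hc ht hne hl h0 xp.
rewrite /move_left.
case E: (rev pre) => [|a s].
  by move: hne; rewrite -(revK pre) E.
have ha : R a x.
  by move: hl; rewrite -(revK pre) E rev_cons last_rcons.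
have xs : x \notin s by move: xp; rewrite -mem_rev E inE negb_or => /andP[].
have [u [v [e1 e2 e3 e4 e5]]] := ins_rP hc ht ha h0 xs.
exists (rev v), (rev u ++ post); rewrite e3 rev_cat rev_cons cat_rcons; split => //.
- by rewrite -catA.
- by rewrite catA -rev_cat -e1 -E revK.
- rewrite (_ : last 0 (rev v) = head 0 v) //; by case: v {e1 e3 e5} => //= b v; rewrite rev_cons last_rcons.
- by case/lastP: u e2 e4 {e1 e3} => [|u' b] // _; rewrite rev_rcons last_rcons.
Qed.

Definition kd w y := [:: lf w y < y; y < lf w y; rt w y < y; y < rt w y].
Definition kP w y := (lf w y < y) && (rt w y < y).
Definition kV w y := (y < lf w y) && (y < rt w y).
Definition kDD w y := (y < lf w y) && (rt w y < y).
Definition kDA w y := (lf w y < y) && (y < rt w y).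

Lemma kd_eq w w' y : kd w' y = kd w y ->
  [/\ kP w' y = kP w y, kV w' y = kV w y, kDD w' y = kDD w y & kDA w' y = kDA w y].
Proof. by rewrite /kd /kP /kV /kDD /kDA => [[-> -> -> ->]]. Qed.

Lemma kd_ss l l' r r' y : ss l l' y -> ss r r' y ->
  [:: l < y; y < l; r < y; y < r] = [:: l' < y; y < l'; r' < y; y < r'].
Proof. by rewrite /ss => /andP[/eqP-> /eqP->] /andP[/eqP-> /eqP->]. Qed.

Lemma fin pre post P2 Q2 x :
  uniq (pre ++ x :: post) -> btw (last 0 pre) x (head 0 post) ->
  P2 ++ Q2 = pre ++ post -> btw (last 0 P2) x (head 0 Q2) ->
  [/\ perm_eq (P2 ++ x :: Q2) (pre ++ x :: post),
      ss (last 0 (P2 ++ x :: Q2)) (last 0 (pre ++ x :: post)) 0,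
      ss (head 0 (P2 ++ x :: Q2)) (head 0 (pre ++ x :: post)) 0,
      forall y, y \in pre ++ x :: post -> y != x ->
        kd (P2 ++ x :: Q2) y = kd (pre ++ x :: post) y
    & lf (P2 ++ x :: Q2) x = last 0 P2 /\ rt (P2 ++ x :: Q2) x = head 0 Q2].
Proof.
move=> u hb e hb2.
have pe : perm_eq (P2 ++ x :: Q2) (pre ++ x :: post).
  rewrite -cat1s perm_catCA e /= perm_sym -cat1s perm_catCA /=; exact: perm_refl.
have u2 : uniq (P2 ++ x :: Q2) by rewrite (perm_uniq pe).
have [l1 h1] := end_side hb; have [l2 h2] := end_side hb2.
split.
- exact: pe.
- by apply: ss_trans l2 _; rewrite e; apply: ss_sym.
- by apply: ss_trans h2 _; rewrite e; apply: ss_sym.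
- move=> y yin yx.
  have yin' : y \in pre ++ post.
    by move: yin; rewrite !mem_cat inE (negbTE yx).
  have [a1 b1] := move_side u hb yin'.
  rewrite -e in yin'.
  have [a2 b2] := move_side u2 hb2 yin'.
  rewrite e in a2 b2.
  rewrite /kd; apply: kd_ss.
  + exact: ss_trans a2 (ss_sym a1).
  + exact: ss_trans b2 (ss_sym b1).
- exact: nbE (uniq_notin u2).
Qed.

Lemma psi_cat pre post x : x \notin pre ->
  psi x (pre ++ x :: post) =
  let l := last 0 pre in let r := head 0 post in
  if (l > x) && (x > r) then
    (if x < 0 then move_right (fun a b => (a < x) && (x < b)) x pre post
     else move_left (fun a b => (a < x) && (x < b)) x pre post)
  else if (l < x) && (x < r) then
    (if x < 0 then move_left (fun a b => (a > x) && (x > b)) x pre post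
     else move_right (fun a b => (a > x) && (x > b)) x pre post)
  else pre ++ x :: post.
Proof.
move=> xp; rewrite /psi.
have hi : index x (pre ++ x :: post) = size pre.
  by rewrite index_cat (negbTE xp) /= eqxx addn0.
rewrite hi take_size_cat // mem_cat inE eqxx orbT /=.
have -> : pre ++ x :: post = (pre ++ [:: x]) ++ post by rewrite -catA.
by rewrite -(size_rcons pre x) -cats1 drop_size_cat // -catA.
Qed.

Lemma tot_lt (x b : int) : b != x -> (x < b) || (b < x).
Proof. by move=> h; apply/orP; lia. Qed.
Lemma tot_gt (x b : int) : b != x -> (b < x) || (x < b).
Proof. by move=> h; apply/orP; lia. Qed.

Lemma btw_dd (l x r : int) : (x < l) && (r < x) -> btw l x r.
Proof. by rewrite /btw => /andP[h1 h2]; rewrite h1 h2 orbT. Qed.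
Lemma btw_da (l x r : int) : (l < x) && (x < r) -> btw l x r.
Proof. by rewrite /btw => ->. Qed.

Lemma ltF (a b : int) : a < b -> b < a -> False.
Proof. by move=> h1 h2; move: (lt_trans h1 h2); rewrite ltxx. Qed.
Ltac ctr := exfalso; match goal with H1 : _, H2 : _ |- _ => exact: (ltF H1 H2) end.

Lemma psi_step x w : uniq w -> 0 \notin w ->
  [/\ perm_eq (psi x w) w, ss (last 0 (psi x w)) (last 0 w) 0,
      ss (head 0 (psi x w)) (head 0 w) 0,
      forall y, y \in w -> y != x -> kd (psi x w) y = kd w y
    & x \in w -> [/\ ~~ kDD w x && ~~ kDA w x -> psi x w = w,
                     kDD w x -> kDA (psi x w) x & kDA w x -> kDD (psi x w) x]].
Proof.
move=> u n0.
case xw: (x \in w); last first.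
  rewrite /psi xw /=; split; [exact: perm_refl|exact: ss_refl|exact: ss_refl|by []|by []].
case/splitPr: xw u n0 => pre post u n0.
have xp := uniq_notin u.
have xpost : x \notin post.
  by move: u; rewrite cat_uniq => /and3P[_ _ /=/andP[]].
have x0 : x != 0 by apply: contraNneq n0 => <-; rewrite mem_cat inE eqxx orbT.
rewrite /kP /kV /kDD /kDA.
have [-> ->] := nbE post xp.
rewrite psi_cat //=.
case: ifP => hdd.
  have hb : btw (last 0 pre) x (head 0 post) by apply: btw_dd.
  case: ifP => hneg.
  -
    have [a [s Ep]] : exists a s, post = a :: s.
      by case: (post) hdd => [|a s] /=; [lia | exists a, s].
    subst post.
    have xs : x \notin s by move: xpost; rewrite inE negb_or => /andP[].
    have [P2 [Q2 [e1 e2 e3 e4]]] := @mr_spec (fun a b => a < b) _ x pre a s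
        (fun u v => erefl) (@tot_lt x) ltac:(by move: hdd => /andP[]) hneg xs.
    have hb2 : btw (last 0 P2) x (head 0 Q2) by apply: btw_da; rewrite e3 e4.
    have [f1 f2 f3 f4 [f5 f6]] := fin u hb e2 hb2.
    rewrite e1 f5 f6; split => // _; split => //;
      try (by move=> _; apply/andP; split);
      try (by move: hdd => /andP[h1 h2] /orP[]/andP[] h3 h4; ctr);
      by move: hdd => /andP[h1 h2] /andP[] h3 h4; ctr.
  -
    have hpos : 0 < x by move: hneg x0; lia.
    have pne : pre != [::] by apply: contraTneq hdd => ->; rewrite /=; lia.
    have [P2 [Q2 [e1 e2 e3 e4]]] := @ml_spec (fun a b => b < a) _ x pre post
        (fun u v => andbC _ _) (@tot_gt x) pne ltac:(by move: hdd => /andP[]) hpos xp.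
    have hb2 : btw (last 0 P2) x (head 0 Q2) by apply: btw_da; rewrite e3 e4.
    have [f1 f2 f3 f4 [f5 f6]] := fin u hb e2 hb2.
    rewrite e1 f5 f6; split => // _; split => //;
      try (by move=> _; apply/andP; split);
      try (by move: hdd => /andP[h1 h2] /orP[]/andP[] h3 h4; ctr);
      by move: hdd => /andP[h1 h2] /andP[] h3 h4; ctr.
case: ifP => hda.
  have hb : btw (last 0 pre) x (head 0 post) by apply: btw_da.
  case: ifP => hneg.
  -
    have pne : pre != [::] by apply: contraTneq hda => ->; rewrite /=; lia.
    have [P2 [Q2 [e1 e2 e3 e4]]] := @ml_spec (fun a b => a < b) _ x pre post
        (fun u v => andbC _ _) (@tot_lt x) pne ltac:(by move: hda => /andP[]) hneg xp.
    have hb2 : btw (last 0 P2) x (head 0 Q2) by apply: btw_dd; rewrite e3 e4.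
    have [f1 f2 f3 f4 [f5 f6]] := fin u hb e2 hb2.
    rewrite e1 f5 f6; split => // _; split => //;
      try (by move=> _; apply/andP; split);
      try (by move: hda => /andP[h1 h2] /orP[]/andP[] h3 h4; ctr);
      by move: hda => /andP[h1 h2] /andP[] h3 h4; ctr.
  -
    have hpos : 0 < x by move: hneg x0; lia.
    have [a [s Ep]] : exists a s, post = a :: s.
      by case: (post) hda => [|a s] /=; [lia | exists a, s].
    subst post.
    have xs : x \notin s by move: xpost; rewrite inE negb_or => /andP[].
    have [P2 [Q2 [e1 e2 e3 e4]]] := @mr_spec (fun a b => b < a) _ x pre a s
        (fun u v => erefl) (@tot_gt x) ltac:(by move: hda => /andP[]) hpos xs.
    have hb2 : btw (last 0 P2) x (head 0 Q2) by apply: btw_dd; rewrite e3 e4.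
    have [f1 f2 f3 f4 [f5 f6]] := fin u hb e2 hb2.
    rewrite e1 f5 f6; split => // _; split => //;
      try (by move=> _; apply/andP; split);
      try (by move: hda => /andP[h1 h2] /orP[]/andP[] h3 h4; ctr);
      by move: hda => /andP[h1 h2] /andP[] h3 h4; ctr.
split; try exact: perm_refl; try exact: ss_refl; try done.
Qed.

Definition fr w y := kDD w y || kDA w y.

Lemma excl_DA w y : kDA w y -> [/\ kP w y = false, kV w y = false & kDD w y = false].
Proof.
rewrite /kDA /kP /kV /kDD => /andP[h1 h2].
split; apply/negbTE/negP => /andP[h3 h4]; ctr.
Qed.
Lemma excl_DD w y : kDD w y -> [/\ kP w y = false, kV w y = false & kDA w y = false].
Proof.
rewrite /kDA /kP /kV /kDD => /andP[h1 h2].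
split; apply/negbTE/negP => /andP[h3 h4]; ctr.
Qed.
Lemma excl_P w y : kP w y -> ~~ fr w y.
Proof. by move=> h; rewrite /fr; apply/negP => /orP[/excl_DD|/excl_DA] []; rewrite h. Qed.
Lemma excl_V w y : kV w y -> ~~ fr w y.
Proof. by move=> h; rewrite /fr; apply/negP => /orP[/excl_DD|/excl_DA] []; rewrite h. Qed.

Lemma fold_inv (w0 l : seq int) : uniq w0 -> 0 \notin w0 -> uniq l ->
  let v := foldr psi w0 l in
  [/\ perm_eq v w0, ss (last 0 v) (last 0 w0) 0, ss (head 0 v) (head 0 w0) 0 &
   forall y, y \in w0 -> [/\ kP v y = kP w0 y, kV v y = kV w0 y,
       kDD v y = kDD w0 y (+) ((y \in l) && fr w0 y)
     & kDA v y = kDA w0 y (+) ((y \in l) && fr w0 y)]].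
Proof.
move=> u0 n0; elim: l => [|x l IH] /=.
  move=> _; split; try exact: perm_refl; try exact: ss_refl.
  by move=> y _; rewrite !addbF.
case/andP => xl ul; have [p1 p2 p3 p4] := IH ul.
set v := foldr psi w0 l in p1 p2 p3 p4 *.
have uv : uniq v by rewrite (perm_uniq p1).
have nv : 0 \notin v by rewrite (perm_mem p1).
have [q1 q2 q3 q4 q5] := psi_step x uv nv.
split.
- exact: perm_trans q1 p1.
- exact: ss_trans q2 p2.
- exact: ss_trans q3 p3.
move=> y yw; have yv : y \in v by rewrite (perm_mem p1).
have [r1 r2 r3 r4] := p4 y yw.
rewrite inE.
case: (eqVneq y x) => [eyx | nyx] /=; last first.
  by have [-> -> -> ->] := kd_eq (q4 y yv nyx).
subst y; rewrite (negbTE xl) /= ?andFb !addbF in r3 r4.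
have [s1 s2 s3] := q5 yv.
case hd: (kDD v x).
  have hA := s2 hd; have [t1 t2 t3] := excl_DA hA.
  have [t4 t5 t6] := excl_DD hd.
  rewrite r3 in hd; rewrite r1 in t4; rewrite r2 in t5; rewrite r4 in t6.
  by rewrite /fr t1 t2 t3 hA hd t4 t5 t6.
case ha: (kDA v x).
  have hD := s3 ha; have [t1 t2 t3] := excl_DD hD.
  have [t4 t5 t6] := excl_DA ha.
  rewrite r4 in ha; rewrite r1 in t4; rewrite r2 in t5; rewrite r3 in t6.
  by rewrite /fr t1 t2 t3 hD ha t4 t5 t6.
have e := s1 ltac:(by rewrite hd ha).
rewrite e r1 r2 r3 r4 /fr; rewrite r3 in hd; rewrite r4 in ha.
by rewrite hd ha !addbF.
Qed.

Lemma fold_filter (w0 l : seq int) : uniq w0 -> 0 \notin w0 -> uniq l ->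
  foldr psi w0 l = foldr psi w0 (filter (fr w0) l).
Proof.
move=> u0 n0; elim: l => [|x l IH] //= /andP[xl ul].
have [p1 p2 p3 p4] := fold_inv u0 n0 ul.
case: ifP => hf /=; rewrite -(IH ul) //.
set v := foldr psi w0 l in p1 p2 p3 p4 *.
case xw: (x \in w0); last by rewrite /psi (perm_mem p1) xw.
have uv : uniq v by rewrite (perm_uniq p1).
have nv : 0 \notin v by rewrite (perm_mem p1).
have [_ _ _ _ q5] := psi_step x uv nv.
have [s1 _ _] := q5 ltac:(by rewrite (perm_mem p1)).
have [_ _ r3 r4] := p4 x xw.
apply: s1; rewrite r3 r4 hf andbF !addbF.
by rewrite -negb_or; apply: negbT.
Qed.

Fixpoint cK (K : int -> int -> int -> bool) (p : int) (w : seq int) : nat :=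
  match w with [::] => 0%N | a :: t => (K p a (head 0%R t) + cK K a t)%N end.
Definition KP (l y r : int) := (l < y) && (r < y).
Definition KV (l y r : int) := (y < l) && (y < r).
Definition KDD (l y r : int) := (y < l) && (r < y).
Definition KDA (l y r : int) := (l < y) && (y < r).

Lemma cnt_letters K pre w : uniq (pre ++ w) ->
  count (fun y => K (lf (pre ++ w) y) y (rt (pre ++ w) y)) w = cK K (last 0 pre) w.
Proof.
elim: w pre => [|a t IH] pre //= u.
have ap : a \notin pre := uniq_notin u.
have [-> ->] := nbE t ap.
rewrite -cat_rcons in u *; rewrite (IH _ u) last_rcons.
by [].
Qed.

Lemma cnt0 K w : uniq w ->
  count (fun y => K (lf w y) y (rt w y)) w = cK K 0 w.
Proof. by move=> u; rewrite -(@cnt_letters K [::] w u). Qed.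

Fixpoint dz (p : int) (w : seq int) : nat :=
  match w with [::] => ((0 < p)%R : nat) | a :: t => ((a < p)%R + dz a t)%N end.

Lemma L1 p w : uniq (p :: w) -> 0 \notin w ->
  dz p w = ((head 0%R w < p)%R + cK KP p w + cK KDD p w)%N.
Proof.
elim: w p => [|a t IH] p /=; first by move=> *; rewrite ?addn0.
move=> /andP[pa ut] n0.
have ap : a != p by apply: contraNneq pa => ->; rewrite inE eqxx.
have n0' : 0 \notin t by move: n0; rewrite inE negb_or => /andP[].
rewrite IH //; rewrite /KP /KDD.
move: ap; rewrite neq_lt => /orP[] h.
- by rewrite h (lt_gtF h) /=; case: (head 0 t < a); rewrite /=; lia.
- by rewrite h (lt_gtF h) /=; case: (head 0 t < a); rewrite /=; lia.
Qed.

Lemma L2 p w : uniq (p :: w) -> 0 \notin w ->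
  dz p w = (cK KV p w + cK KDD p w + (0 < last p w)%R)%N.
Proof.
elim: w p => [|a t IH] p /=; first by move=> *; rewrite ?addn0.
move=> /andP[pa ut] n0.
have n0' : 0 \notin t by move: n0; rewrite inE negb_or => /andP[].
have a0 : a != 0 by move: n0; rewrite inE negb_or eq_sym => /andP[].
have ah : head 0 t != a.
  move: ut n0'; case: (t) => [|b t'] /=; first by rewrite eq_sym.
  by rewrite inE negb_or eq_sym => /andP[/andP[]].
rewrite IH //; rewrite /KV /KDD.
move: ah; rewrite neq_lt => /orP[] h.
- by rewrite h (lt_gtF h) /=; case: (a < p); rewrite /=; lia.
- by rewrite h (lt_gtF h) /=; case: (a < p); rewrite /=; lia.
Qed.

Lemma iotaS m n : iota m.+1 n = map succn (iota m n).
Proof. by elim: n m => //= n IH m; rewrite IH. Qed.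

Lemma desE a b t : des [:: a, b & t] = ((b < a)%R + des (b :: t))%N.
Proof.
by rewrite /des /= iotaS count_map.
Qed.

Lemma L3 a t : dz a t = (des (a :: t) + (0 < last a t)%R)%N.
Proof.
elim: t a => [|b t IH] a //=.
by rewrite IH desE addnA.
Qed.

Lemma partition p w : uniq (p :: w) -> 0 \notin w ->
  (cK KP p w + cK KV p w + cK KDD p w + cK KDA p w)%N = size w.
Proof.
elim: w p => [|a t IH] p /=; first by move=> *; rewrite ?addn0.
move=> /andP[pa ut] n0.
have n0' : 0 \notin t by move: n0; rewrite inE negb_or => /andP[].
have a0 : a != 0 by move: n0; rewrite inE negb_or eq_sym => /andP[].
have ap : a != p by apply: contraNneq pa => ->; rewrite inE eqxx.
have ah : head 0 t != a.
  move: ut n0'; case: (t) => [|b t'] /=; first by rewrite eq_sym.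
  by rewrite inE negb_or eq_sym => /andP[/andP[]].
rewrite -(IH a ut n0'); rewrite /KP /KV /KDD /KDA.
move: ap ah; rewrite !neq_lt => /orP[] h1 /orP[] h2;
  rewrite h1 h2 (lt_gtF h1) (lt_gtF h2) /=; lia.
Qed.

Lemma peakE a b c t : peak [:: a, b, c & t] = (((a < b) && (c < b))%R + peak [:: b, c & t])%N.
Proof.
rewrite /peak /= iotaS count_map.
congr (_ + _)%N; apply: eq_in_count => i; rewrite mem_iota => /andP[hi _] /=.
by case: i hi.
Qed.

Lemma L4 a t : last a t < 0 -> cK KP a t = peak (a :: t).
Proof.
elim: t a => [|b t IH] a; first by [].
case: t IH => [|c t] IH h.
  rewrite /= /KP /peak /=; move: h => /= h.
  by rewrite (lt_gtF h) andbF.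
by rewrite peakE -IH //=; rewrite /KP.
Qed.

Lemma ndd_cK p w :
  all (fun k => ~~ KDD (nth 0 (p :: rcons w 0) k.-1) (nth 0 (p :: rcons w 0) k)
                       (nth 0 (p :: rcons w 0) k.+1)) (iota 1 (size w)) ->
  cK KDD p w = 0%N.
Proof.
elim: w p => [|a t IH] p //=.
rewrite iotaS all_map => /andP[h1 h2].
have -> : head 0 t = nth 0 (rcons t 0) 0 by case: (t).
rewrite (negbTE h1) /=; apply: IH.
move: h2; rewrite /= iotaS all_map.
rewrite all_map; apply: sub_all => k /=; by [].
Qed.

Section Poset.
Variables (T : finType) (le : rel T).
Hypothesis po : partial_order le.

Definition below x := [set z | plt le z x].
Definition incomp (z : T) := fun y => ~~ (le y z || le z y).
Definition CH (s : seq T) (x : T) := sat_chain_to le s x &&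
    [forall z, le z x ==> (z \in s) || has (incomp z) s].

Lemma plt_trans : transitive (plt le).
Proof.
case: po => rf an tr y x z; rewrite /plt => /andP[xy lxy] /andP[yz lyz].
rewrite (tr _ _ _ lxy lyz) andbT; apply: contraNneq xy => exz; subst z.
by apply/eqP/an; rewrite lxy lyz.
Qed.

Lemma plt_irr x : plt le x x = false.
Proof. by rewrite /plt eqxx. Qed.

Lemma chain_min x : minimal le x -> CH [:: x] x.
Proof.
move=> mx; rewrite /CH /= mx eqxx /=; apply/forallP => z; apply/implyP => hz.
by move: mx => /forallP/(_ z); rewrite hz /= => /eqP ->; rewrite inE eqxx.
Qed.

Lemma nonmin x : ~~ minimal le x -> exists z, z \in below x.
Proof.
rewrite /minimal negb_forall => /existsP[z]; rewrite negb_imply => /andP[hz nz].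
by exists z; rewrite inE /plt nz hz.
Qed.

Lemma pick_cover x z : z \in below x ->
  exists y, covers le y x /\ (#|below y| < #|below x|)%N.
Proof.
move=> zb.
pose y := [arg max_(y > z in below x) #|below y|].
have [yb ymax] : y \in below x /\ forall t, t \in below x -> (#|below t| <= #|below y|)%N.
  by rewrite /y; case: arg_maxnP => // i ib im; split.
have sub_y : forall t, plt le y t -> (#|below y| < #|below t|)%N.
  move=> t yt; apply: proper_card; apply/properP; split.
    apply/subsetP => w; rewrite !inE => wy; exact: plt_trans wy yt.
  by exists y; rewrite !inE ?yt ?plt_irr.
exists y; split; last by apply: sub_y; move: yb; rewrite inE.
move: (yb); rewrite inE => yx; rewrite /covers yx /=; apply/forallP => t.
apply/negP => /andP[yt tx].
by have := ymax t; rewrite inE tx => /(_ isT); rewrite leqNgt sub_y.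
Qed.

Lemma extend s y x : CH s y -> covers le y x -> CH (rcons s x) x.
Proof.
case: po => rf an tr.
case: s => [|m s] //= /andP[/and3P[mm ps ly] hz] cv.
apply/andP; split.
  by rewrite /= mm rcons_path ps (eqP ly) cv last_rcons eqxx.
apply/forallP => z; apply/implyP => zx.
have yin : y \in m :: s by rewrite -(eqP ly) mem_last.
case: (eqVneq z x) => [->|nzx]; first by rewrite -rcons_cons mem_rcons inE eqxx.
rewrite -rcons_cons mem_rcons inE (negbTE nzx) /= has_rcons.
case zy: (le z y).
  move: hz => /forallP/(_ z); rewrite zy /= => /orP[->//|/orP[] ->]; by rewrite ?orbT.
case yz: (le y z).
  exfalso; move: cv => /andP[_ /forallP/(_ z)]; rewrite /plt.
  rewrite yz zx nzx andbT /=.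
  case: (eqVneq y z) => [eyz|//]; by move: zy; rewrite eyz rf.
have : has (incomp z) (m :: s) by apply/hasP; exists y => //; rewrite /incomp yz zy.
by move=> /= /orP[] ->; rewrite ?orbT.
Qed.

Lemma ex_chain n x : (#|below x| <= n)%N -> exists s, CH s x.
Proof.
elim: n x => [|n IH] x hx; case mx: (minimal le x);
  try by exists [:: x]; apply: chain_min.
- have [z zb] := nonmin (negbT mx).
  by move: hx; rewrite leqn0 => /eqP/cards0_eq/setP/(_ z); rewrite zb inE.
- have [z zb] := nonmin (negbT mx).
  have [y [cv hy]] := pick_cover zb.
  have [s hs] := IH y ltac:(by rewrite -ltnS; apply: leq_trans hy hx).
  by exists (rcons s x); apply: extend hs cv.
Qed.

End Poset.

Lemma wordcount v : uniq v -> 0 \notin v ->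
  (des v + (0 < last 0 v)%R = count (kP v) v + count (kDD v) v)%N.
Proof.
move=> u n0; rewrite (cnt0 KP u) (cnt0 KDD u).
case: v u n0 => [|a t] // u n0.
have u0 : uniq (0 :: a :: t) by rewrite cons_uniq n0 u.
have := L1 u0 n0; rewrite /= L3 => h.
have a0 : (a < 0)%R || (0 < a)%R.
  by move: n0; rewrite inE negb_or => /andP[h0 _]; rewrite -neq_lt eq_sym.
rewrite /KP /KDD in h *; case/orP: a0 => ha; rewrite ?ha ?(lt_gtF ha) /= in h *; lia.
Qed.

Lemma peak_count v : uniq v -> (head 0 v < 0)%R -> (last 0 v < 0)%R ->
  peak v = count (kP v) v.
Proof.
move=> u; rewrite (cnt0 KP u); case: v u => [|a t] //= u ha hl.
by rewrite -L4 // /KP (lt_gtF ha).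
Qed.

Lemma powsum (R : comPzRingType) (I : finType) (F : {set I}) (x : R) :
  \sum_(A in powerset F) x ^+ #|A| = (1 + x) ^+ #|F|.
Proof.
rewrite -prodr_const [RHS]big_mkcond /=.
have -> : \prod_i (if i \in F then 1 + x else 1) =
          \prod_i ((if i \in F then x else 0) + 1).
  by apply: eq_bigr => i _; case: (i \in F); rewrite ?add0r // addrC.
rewrite bigA_distr big_mkcond /=; apply: eq_bigr => J _.
rewrite powersetE; case: ifP => hJ.
  rewrite -big_mkcond /= -prodr_const; apply: eq_big => // i /=.
  by move=> iJ; rewrite (subsetP hJ i iJ).
move/negbT: hJ => /subsetPn[i iJ iF].
rewrite (bigD1 i) //= iJ (negbTE iF) mul0r //.
Qed.

Lemma card_count (T : finType) (P : pred T) : count P (enum T) = #|[set t | P t]|.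
Proof.
rewrite -size_filter cardE; congr size; rewrite /enum_mem -filter_predI.
by apply: eq_filter => t; rewrite /= inE andbT.
Qed.

Lemma CH_max (T : finType) (le : rel T) s x :
  CH le s x -> (forall z, le x z -> z = x) -> maximal_chain le s.
Proof.
case: s => [|m s] //= /andP[/and3P[mm ps ly] hz] hmax.
rewrite /maximal_chain /=; apply/andP; split.
  by apply: sub_path ps => a b /andP[].
have xin : x \in m :: s by rewrite -(eqP ly) mem_last.
apply/forallP => z.
case zx: (le z x).
  by move: hz => /forallP/(_ z); rewrite zx.
case xz: (le x z).
  by rewrite (hmax z xz) xin.
have : has (incomp le z) (m :: s) by apply/hasP; exists x => //; rewrite /incomp xz zx.
by rewrite /incomp /= => /orP[] ->; rewrite ?orbT.
Qed.

Lemma filter_enum (T : finType) (A : {set T}) (p : pred T) :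
  filter p (enum A) = enum (A :&: [set t | p t]).
Proof.
by rewrite /enum_mem -filter_predI; apply: eq_filter => t; rewrite /= !inE andbC.
Qed.

Unset Implicit Arguments.
Set Strict Implicit.

Theorem theorem6p3 (T : finType) (le : rel T) (omega : T -> int) (r : int)
    (pi : seq int) :
  partial_order le ->
  injective omega ->
  (0 < #|T|)%N ->
  sign_graded_rank le omega r ->
  canonical le omega ->
  in_JH le omega pi ->
  forall pihat : seq int,
    pihat \in orbit_of omega pi ->
    no_double_descent pihat ->
    let e := (#|T|%:Z - r - 1 - 2 * (des pihat)%:Z) in
    [/\ 0 <= e,
        \sum_(sigma <- orbit_of omega pi) ('X^(des sigma) : {poly int})
          = 'X^(des pihat) * (1 + 'X) ^+ `|e|%N
      & r = 0 ->
        (forall sigma, sigma \in orbit_of omega pi -> peak sigma = peak pi)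
        /\ peak pi = des pihat].
Proof.
move=> po oinj Tpos sg can jh pihat hpi ndd e.
case/andP: jh => jh1 jh2.
have [_ hcan] := can.
have upi : uniq pi by rewrite (perm_uniq jh1) (map_inj_uniq oinj) enum_uniq.
have memT : forall y, y \in pi -> exists t, y = omega t.
  by move=> y; rewrite (perm_mem jh1) => /mapP[t _ ->]; exists t.
have inpi : forall t, omega t \in pi by move=> t; rewrite (perm_mem jh1) map_f ?mem_enum.
have sgn : forall t, (omega t < 0) || (0 < omega t).
  move=> t; have [s /andP[sc _]] := ex_chain po (leqnn #|below le t|).
  by case: (hcan t s sc) => [[_ ->]|[_ ->]]; rewrite ?orbT.
have n0 : 0 \notin pi.
  by apply/negP => /memT [t et]; move: (sgn t); rewrite -et ltxx.
have u0 : uniq (0 :: pi) by rewrite cons_uniq n0 upi.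
have sizepi : size pi = #|T| by rewrite (perm_size jh1) size_map cardT.
have idx : forall x y, plt le x y -> (index (omega x) pi < index (omega y) pi)%N.
  by move=> x y hxy; move: jh2 => /forallP/(_ x)/forallP/(_ y); rewrite hxy.
have hd : head 0 pi < 0.
  case: pi sizepi upi memT idx {inpi n0 u0 jh1 jh2 hpi} => [|a t] sizepi upi memT idx.
    by move: Tpos; rewrite -sizepi.
  have [m em] := memT a (mem_head a t).
  have mm : minimal le m.
    apply/forallP => z; apply/implyP => hz; apply/negPn/negP => nz.
    have := idx z m; rewrite /plt nz hz -em /= eqxx => /(_ isT).
    by rewrite ltn0.
  have sc : sat_chain_to le [:: m] m by rewrite /= mm eqxx.
  case: (hcan m [:: m] sc) => [[_ h]|[h _]]; first by rewrite /= em.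
  by move: h; rewrite /chain_sum /= big_nil.
have hl : (r = 0 /\ last 0 pi < 0) \/ (r = 1 /\ 0 < last 0 pi).
  case/lastP: pi sizepi upi memT idx jh1 {inpi n0 u0 jh2 hpi hd} => [|t b] sizepi upi memT idx jh1.
    by move: Tpos; rewrite -sizepi.
  have [M eM] := memT b ltac:(by rewrite mem_rcons mem_head).
  have bt : b \notin t by move: upi; rewrite rcons_uniq => /andP[].
  have iM : index b (rcons t b) = size t by rewrite -cats1 index_cat (negbTE bt) /= eqxx addn0.
  have mx : forall z, le M z -> z = M.
    move=> z hz; apply/eqP/negPn/negP => nz.
    have := idx M z; rewrite /plt eq_sym nz hz -eM iM => /(_ isT) h.
    have : omega z \in rcons t b by rewrite (perm_mem jh1) map_f ?mem_enum.
    by rewrite -index_mem size_rcons ltnS leqNgt h.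
  have [s hs] := ex_chain po (leqnn #|below le M|).
  have mc := CH_max hs mx.
  have := sg s mc; move: hs => /andP[sc _].
  rewrite last_rcons eM.
  by case: (hcan M s sc) => [[-> h]|[-> h]] <-; [left|right].
pose g (A : {set T}) := psiS omega A pi.
pose l (A : {set T}) := map omega (enum A).
have ul : forall A, uniq (l A) by move=> A; rewrite (map_inj_uniq oinj) enum_uniq.
have gE : forall A, g A = foldr psi pi (l A) by move=> A; rewrite /g /psiS foldr_map.
have mem_l : forall A t, (omega t \in l A) = (t \in A) by move=> A t; rewrite mem_map // mem_enum.
pose Fs := [set t | fr pi (omega t)].
pose D := [set t | kDD pi (omega t)].
have DF : D \subset Fs by apply/subsetP => t; rewrite !inE /fr => ->.
have gF : forall A, g A = g (A :&: Fs).
  move=> A; rewrite !gE (fold_filter upi n0 (ul A)) (fold_filter upi n0 (ul _)).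
  by rewrite /l !filter_map !filter_enum -setIA setIid.
have inv := fun A => fold_inv upi n0 (ul A).
have kDDg : forall (A : {set T}) t, A \subset Fs -> kDD (g A) (omega t) = (t \in D) (+) (t \in A).
  move=> A t AF; rewrite gE; have [_ _ _ h] := inv A; have [_ _ -> _] := h _ (inpi t).
  rewrite mem_l inE; case tA: (t \in A) => //=.
  by move: (subsetP AF t tA); rewrite inE => ->.
have ginj : {in powerset Fs &, injective g}.
  move=> A B; rewrite !powersetE => AF BF eAB; apply/setP => t.
  have := kDDg A t AF; rewrite eAB kDDg // => /addbI.
  by [].
have orbE : forall s, (s \in orbit_of omega pi) = (s \in [seq g A | A <- enum (powerset Fs)]).
  move=> s; rewrite /orbit_of mem_undup; apply/mapP/mapP => [[A _ ->]|[A _ ->]].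
    by exists (A :&: Fs); [rewrite mem_enum powersetE subsetIr | rewrite -gF].
  by exists A; rewrite ?mem_enum ?in_setT.
have perm_orb : perm_eq (orbit_of omega pi) [seq g A | A <- enum (powerset Fs)].
  apply: uniq_perm; first exact: undup_uniq.
    by rewrite (map_inj_in_uniq _) ?enum_uniq // => A B; rewrite !mem_enum; apply: ginj.
  exact: orbE.
have gfacts : forall A, [/\ uniq (g A), 0 \notin g A, perm_eq (g A) pi,
     ss (last 0 (g A)) (last 0 pi) 0 & ss (head 0 (g A)) (head 0 pi) 0].
  move=> A; rewrite gE; have [p1 p2 p3 _] := inv A.
  by split => //; rewrite ?(perm_uniq p1) ?(perm_mem p1).
have cntP : forall A, count (kP (g A)) (g A) = count (kP pi) pi.
  move=> A; have [_ _ p1 _ _] := gfacts A; rewrite (permP p1).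
  have [_ _ _ h] := inv A; rewrite -gE in h.
  by apply: eq_in_count => y /h [].
have cntDD : forall A : {set T}, A \subset Fs ->
    count (kDD (g A)) (g A) = #|[set t | (t \in D) (+) (t \in A)]|.
  move=> A AF; have [_ _ p1 _ _] := gfacts A; rewrite (permP p1) (permP jh1) count_map.
  by rewrite card_count; apply: eq_card => t; rewrite !inE /= kDDg // inE.
have lastg : forall A, (0 < last 0 (g A)) = (0 < last 0 pi).
  by move=> A; have [_ _ _ /andP[_ /eqP ->] _] := gfacts A.
set nP := count (kP pi) pi.
have desg : forall A : {set T}, A \subset Fs ->
    (des (g A) + (0 < last 0 pi)%R = nP + #|[set t | (t \in D) (+) (t \in A)]|)%N.
  move=> A AF; have [u1 u2 _ _ _] := gfacts A.
  by rewrite -(lastg A) wordcount // cntP cntDD.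
have [A0 A0F ePh] : exists2 A0 : {set T}, A0 \subset Fs & pihat = g A0.
  by move: hpi; rewrite orbE => /mapP[A0]; rewrite mem_enum powersetE; exists A0.
have desh : (des pihat + (0 < last 0 pi)%R = nP)%N.
  have [u1 u2 _ _ _] := gfacts A0.
  rewrite ePh -(lastg A0) wordcount // cntP -ePh.
  rewrite (@cnt0 KDD pihat) ?ePh // -ePh (ndd_cK ndd) addn0 //.
have cF : #|Fs| = (cK KDD 0 pi + cK KDA 0 pi)%N.
  rewrite /Fs -card_count -count_map -(permP jh1) -(cnt0 KDD upi) -(cnt0 KDA upi).
  rewrite -count_predUI.
  have -> : count (predI (kDD pi) (kDA pi)) pi = 0%N.
    rewrite (eq_count (a2 := pred0)) ?count_pred0 // => y /=.
    by case h: (kDD pi y); rewrite //=; have [_ _ ->] := excl_DD h.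
  by rewrite addn0; apply: eq_count => y.
have hpart := partition u0 n0.
have hL := L1 u0 n0; rewrite L2 // in hL.
have nPE : nP = cK KP 0 pi by rewrite /nP (cnt0 KP upi).
rewrite sizepi in hpart.
rewrite hd /= in hL.
have [r' [er hdel]] : exists r' : nat, r = r'%:Z /\ (0 < last 0 pi)%R = (r' == 1)%N.
  by case: hl => [[-> h]|[-> h]]; [exists 0%N; rewrite (lt_gtF h) | exists 1%N; rewrite h].
rewrite hdel in hL desh.
have key : #|T| = (#|Fs| + 2 * des pihat + 1 + r')%N.
  case: hl => [[r0 _]|[r1 _]].
    have r'0 : r' = 0%N by move: er; rewrite r0 => -[].
    by rewrite r'0 /= in hL desh *; rewrite nPE in desh; rewrite -hpart cF; lia.
  have r'1 : r' = 1%N by move: er; rewrite r1 => -[].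
  by rewrite r'1 /= in hL desh *; rewrite nPE in desh; rewrite -hpart cF; lia.
have ee : e = #|Fs|%:Z by rewrite /e key er; lia.
split.
- by rewrite ee.
- rewrite (perm_big _ perm_orb) big_map big_enum /= ee absz_nat.
  pose h (A : {set T}) := [set t | (t \in D) (+) (t \in A)].
  transitivity (\sum_(A in powerset Fs) ('X^(des pihat) * 'X^#|h A| : {poly int})).
    apply: eq_bigr => A; rewrite powersetE => AF; rewrite -exprD; congr ('X^_).
    by have := desg A AF; rewrite hdel /h; move: desh; lia.
  rewrite -big_distrr /=; congr (_ * _).
  have hK : involutive h by move=> A; apply/setP => t; rewrite !inE addKb.
  rewrite (reindex_inj (inv_inj hK)) /=.
  rewrite -(powsum _ 'X); apply: eq_big => [A|A _]; last by rewrite hK.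
  rewrite !powersetE; apply/idP/idP => /subsetP H; apply/subsetP => t.
  + case tD: (t \in D); first by move=> _; apply: (subsetP DF).
    by move=> tA; apply: H; rewrite inE tD tA.
  + rewrite inE; case tD: (t \in D); first by move=> _; apply: (subsetP DF).
    by move=> /= tA; apply: H.
- move=> r0.
  have r'0 : r' = 0%N by move: er; rewrite r0 => -[].
  have hlast : last 0 pi < 0.
    by case: hl => [[_ h]|[r1 _]] //; move: r1; rewrite r0.
  have ppi : peak pi = nP by rewrite peak_count.
  split.
    move=> s; rewrite orbE => /mapP[A _ ->]; rewrite ppi.
    have [u1 _ _ /andP[/eqP l1 _] /andP[/eqP h1 _]] := gfacts A.
    by rewrite peak_count // ?cntP // ?l1 ?h1.
  by rewrite ppi -desh r'0 /= addn0.
Qed.
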